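(* Let $\mathbb{D}=\{z\in\mathbb{C}:|z|<1\}$. For $\beta\in(1,\tfrac{11}{8}]$ let $$\mathcal{P}(\beta)=\Big\{f=h+\overline{g}\in\mathcal{H}:\ g'(z)=zh'(z)\ \text{and}\ \operatorname{Re}\Big(1+\frac{zh''(z)}{h'(z)}\Big)<\beta\ \text{for all } z\in\mathbb{D}\Big\}.$$ Then for every $\beta\in(1,\tfrac{11}{8}]$ the class $\mathcal{P}(\beta)$ contains a function that is not univalent in $\mathbb{D}$. More precisely, for each $\gamma\in(1,\tfrac74]$ the harmonic function $f_\gamma=h+\overline{g}$ with $$h(z)=\frac{1}{\gamma}\big[1-(1-z)^{\gamma}\big],\qquad g(z)=\frac{1}{\gamma(1+\gamma)}\big[1-(1+\gamma z)(1-z)^{\gamma}\big]$$ (principal branches) belongs to $\mathcal{P}((1+\gamma)/2)$, hence to $\mathcal{P}(\beta)$ for every $\beta\ge(1+\gamma)/2$, and $f_\gamma$ is not univalent in $\mathbb{D}$.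
   Context: $\mathcal{H}$ denotes the class of complex-valued harmonic functions $f=h+\overline{g}$ on $\mathbb{D}$, with $h,g$ analytic in $\mathbb{D}$, normalized by $f(0)=0$ and $f_z(0)=1$, i.e. $f(z)=z+\sum_{k\ge2}a_kz^k+\overline{\sum_{k\ge1}b_kz^k}$. *)

(* Defs.v *)
From Stdlib Require Import Reals.
From Coquelicot Require Import Coquelicot.
Open Scope R_scope.

Definition CC := Complex.C.

Definition inD (z : CC) : Prop := Cmod z < 1.

Definition cderiv (f : CC -> CC) (z l : CC) : Prop :=
  @is_derive C_AbsRing C_NormedModule f z l.

Definition cexp (w : CC) : CC :=
  (exp (Re w) * cos (Im w), exp (Re w) * sin (Im w)).

(* principal argument, in (-PI, PI] *)
Definition carg (w : CC) : R :=
  let x := Re w in let y := Im w in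
  match Rlt_dec 0 x with
  | left _ => atan (y / x)
  | right _ =>
    match Rlt_dec x 0 with
    | left _ => if Rle_dec 0 y then atan (y / x) + PI else atan (y / x) - PI
    | right _ => if Rlt_dec 0 y then PI / 2 else
                 if Rlt_dec y 0 then - (PI / 2) else 0
    end
  end.

Definition clog (w : CC) : CC := (ln (Cmod w), carg w).

(* principal power w^a, a real, w <> 0 (set to 0 at w = 0) *)
Definition cpow (w : CC) (a : R) : CC :=
  if Req_EM_T (Cmod w) 0 then RtoC 0 else cexp (Cmult (RtoC a) (clog w)).

(* f = h + conj g belongs to the class P(beta): h, g analytic in D,
   normalized (h(0)=0, g(0)=0, h'(0)=1), g' = z h', and
   Re (1 + z h''/h') < beta on D (h' nonvanishing so the quotient is defined). *)
Definition in_P (beta : R) (h g : CC -> CC) : Prop :=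
  exists h1 h2 g1 : CC -> CC,
    (forall z, inD z -> cderiv h z (h1 z) /\ cderiv h1 z (h2 z) /\ cderiv g z (g1 z)) /\
    h (RtoC 0) = RtoC 0 /\ g (RtoC 0) = RtoC 0 /\ h1 (RtoC 0) = RtoC 1 /\
    (forall z, inD z -> g1 z = Cmult z (h1 z)) /\
    (forall z, inD z -> h1 z <> RtoC 0 /\
        Re (Cplus (RtoC 1) (Cdiv (Cmult z (h2 z)) (h1 z))) < beta).

Definition harm (h g : CC -> CC) (z : CC) : CC := Cplus (h z) (Cconj (g z)).

Definition univalent_D (f : CC -> CC) : Prop :=
  forall z w, inD z -> inD w -> f z = f w -> z = w.

Definition h_gam (gam : R) (z : CC) : CC :=
  Cdiv (Cminus (RtoC 1) (cpow (Cminus (RtoC 1) z) gam)) (RtoC gam).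
Definition g_gam (gam : R) (z : CC) : CC :=
  Cdiv (Cminus (RtoC 1)
          (Cmult (Cplus (RtoC 1) (Cmult (RtoC gam) z)) (cpow (Cminus (RtoC 1) z) gam)))
       (RtoC (gam * (1 + gam))).

(* Main.v *)
Require Import Defs.
From Stdlib Require Import Reals Lra.
From Coquelicot Require Import Coquelicot.
Open Scope R_scope.

Lemma cderiv_eps (f : CC -> CC) z l :
  (forall eps : posreal, exists delta : posreal, forall w,
     Cmod (Cminus w z) < delta ->
     Cmod (Cminus (Cminus (f w) (f z)) (Cmult (Cminus w z) l)) <= eps * Cmod (Cminus w z)) ->
  cderiv f z l.
Proof.
  intros H. unfold cderiv, is_derive. split.
  - apply is_linear_scal_l.
  - intros x Hx. apply (@is_filter_lim_locally_unique C_AbsRing (AbsRing_NormedModule C_AbsRing)) in Hx. subst x.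
    intros eps. destruct (H eps) as [d Hd]. exists d. intros w Hw. apply Hd. exact Hw.
Qed.

Definition locC (z : CC) (P : CC -> Prop) := @locally (AbsRing_UniformSpace C_AbsRing) z P.

Lemma locC_intro (z : CC) (P : CC -> Prop) (d : posreal) :
  (forall w, Cmod (Cminus w z) < d -> P w) -> locC z P.
Proof. intros H. exists d. intros w Hw. apply H. exact Hw. Qed.

Lemma locally_Re_lt (z : CC) c : Re z < c -> locC z (fun p : CC => Re p < c).
Proof.
  intros H. assert (Hp : 0 < c - Re z) by lra.
  apply (locC_intro _ _ (mkposreal _ Hp)). intros w Hw. simpl in Hw.
  pose proof (re_le_Cmod (Cminus w z)) as H1.
  unfold Cminus in H1. rewrite re_plus, re_opp in H1.
  unfold Cminus in Hw. assert (H3: Rabs (Re w + - Re z) < c - Re z) by lra.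
  apply Rabs_def2 in H3 as [H4 H5]; lra.
Qed.

Lemma Cmod_le_abs (a b : R) : Cmod (a, b) <= Rabs a + Rabs b.
Proof.
  unfold Cmod; simpl.
  pose proof (Rabs_pos a); pose proof (Rabs_pos b).
  rewrite <- (sqrt_Rsqr (Rabs a + Rabs b)) by lra.
  apply sqrt_le_1_alt. unfold Rsqr.
  assert (Rabs a * Rabs a = a * a) by (rewrite <- Rabs_mult; apply Rabs_pos_eq; nra).
  assert (Rabs b * Rabs b = b * b) by (rewrite <- Rabs_mult; apply Rabs_pos_eq; nra).
  nra.
Qed.

Lemma CR (F : CC -> CC) (u v : R -> R -> R) x y ux uy vx vy :
  (forall p : CC, F p = (u (fst p) (snd p), v (fst p) (snd p))) ->
  differentiable_pt_lim u x y ux uy -> differentiable_pt_lim v x y vx vy ->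
  vx = - uy -> vy = ux -> cderiv F (x, y) (ux, vx).
Proof.
  intros HF Hu Hv E1 E2. apply cderiv_eps. intros eps.
  destruct (Hu (pos_div_2 eps)) as [d1 H1].
  destruct (Hv (pos_div_2 eps)) as [d2 H2].
  assert (Hd : 0 < Rmin d1 d2) by (apply Rmin_pos; apply cond_pos).
  exists (mkposreal _ Hd). intros [a b] Hw. simpl in Hw.
  assert (Hm : Rmax (Rabs (a - x)) (Rabs (b - y)) <= Cmod (Cminus (a, b) (x, y))).
  { pose proof (Rmax_Cmod (Cminus (a, b) (x, y))) as R1. simpl in R1.
    replace (a + - x) with (a - x) in R1 by ring. replace (b + - y) with (b - y) in R1 by ring. exact R1. }
  assert (Ha : Rabs (a - x) < d1 /\ Rabs (a - x) < d2).
  { pose proof (Rmax_l (Rabs (a - x)) (Rabs (b - y))). pose proof (Rmin_l d1 d2). pose proof (Rmin_r d1 d2). lra. }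
  assert (Hb : Rabs (b - y) < d1 /\ Rabs (b - y) < d2).
  { pose proof (Rmax_r (Rabs (a - x)) (Rabs (b - y))). pose proof (Rmin_l d1 d2). pose proof (Rmin_r d1 d2). lra. }
  specialize (H1 a b (proj1 Ha) (proj1 Hb)). specialize (H2 a b (proj2 Ha) (proj2 Hb)).
  simpl in H1, H2.
  rewrite !HF. simpl fst; simpl snd.
  match goal with |- Cmod ?X <= _ => replace X with
    (u a b - u x y - (ux * (a - x) + uy * (b - y)), v a b - v x y - (vx * (a - x) + vy * (b - y))) end.
  2:{ unfold Cminus, Cplus, Copp, Cmult; simpl. rewrite E1, E2. f_equal; ring. }
  eapply Rle_trans. apply Cmod_le_abs.
  pose proof (cond_pos eps). nra.
Qed.

Lemma dpl_eq f x y lx ly lx' ly' : differentiable_pt_lim f x y lx ly -> lx = lx' -> ly = ly' ->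
  differentiable_pt_lim f x y lx' ly'.
Proof. intros H -> ->. exact H. Qed.

Lemma dpl_fst x y : differentiable_pt_lim (fun a b => a) x y 1 0.
Proof. intros eps. exists eps. intros u v _ _.
  replace (u - x - (1 * (u - x) + 0 * (v - y))) with 0 by ring. rewrite Rabs_R0.
  pose proof (cond_pos eps). pose proof (Rabs_pos (u - x)). pose proof (Rmax_l (Rabs (u-x)) (Rabs (v - y))). nra. Qed.

Lemma dpl_snd x y : differentiable_pt_lim (fun a b => b) x y 0 1.
Proof. intros eps. exists eps. intros u v _ _.
  replace (v - y - (0 * (u - x) + 1 * (v - y))) with 0 by ring. rewrite Rabs_R0.
  pose proof (cond_pos eps). pose proof (Rabs_pos (u - x)). pose proof (Rmax_l (Rabs (u-x)) (Rabs (v - y))). nra. Qed.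

Lemma dpl_const c x y : differentiable_pt_lim (fun a b => c) x y 0 0.
Proof. intros eps. exists eps. intros u v _ _.
  replace (c - c - (0 * (u - x) + 0 * (v - y))) with 0 by ring. rewrite Rabs_R0.
  pose proof (cond_pos eps). pose proof (Rabs_pos (u - x)). pose proof (Rmax_l (Rabs (u-x)) (Rabs (v - y))). nra. Qed.

Lemma dpl_add0 p q : differentiable_pt_lim (fun a b => a + b) p q 1 1.
Proof. intros eps. exists eps. intros u v _ _.
  replace (u + v - (p + q) - (1 * (u - p) + 1 * (v - q))) with 0 by ring. rewrite Rabs_R0.
  pose proof (cond_pos eps). pose proof (Rabs_pos (u - p)). pose proof (Rmax_l (Rabs (u-p)) (Rabs (v - q))). nra. Qed.

Lemma dpl_mul0 p q : differentiable_pt_lim (fun a b => a * b) p q q p.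
Proof. intros eps. exists eps. intros u v H1 H2.
  replace (u * v - p * q - (q * (u - p) + p * (v - q))) with ((u - p) * (v - q)) by ring.
  rewrite Rabs_mult.
  pose proof (cond_pos eps). pose proof (Rabs_pos (u - p)). pose proof (Rabs_pos (v - q)).
  pose proof (Rmax_l (Rabs (u-p)) (Rabs (v - q))). pose proof (Rmax_r (Rabs (u-p)) (Rabs (v - q))). nra. Qed.

Lemma dpl_plus f g x y fx fy gx gy :
  differentiable_pt_lim f x y fx fy -> differentiable_pt_lim g x y gx gy ->
  differentiable_pt_lim (fun a b => f a b + g a b) x y (fx + gx) (fy + gy).
Proof. intros Hf Hg.
  eapply dpl_eq. apply (differentiable_pt_lim_comp (fun a b => a + b) f g). apply dpl_add0. exact Hf. exact Hg. ring. ring. Qed.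

Lemma dpl_mult f g x y fx fy gx gy :
  differentiable_pt_lim f x y fx fy -> differentiable_pt_lim g x y gx gy ->
  differentiable_pt_lim (fun a b => f a b * g a b) x y (fx * g x y + f x y * gx) (fy * g x y + f x y * gy).
Proof. intros Hf Hg.
  eapply dpl_eq. apply (differentiable_pt_lim_comp (fun a b => a * b) f g). apply dpl_mul0. exact Hf. exact Hg. ring. ring. Qed.

Lemma dpl_comp1 (g : R -> R) g' f x y fx fy :
  derivable_pt_lim g (f x y) g' -> differentiable_pt_lim f x y fx fy ->
  differentiable_pt_lim (fun a b => g (f a b)) x y (g' * fx) (g' * fy).
Proof. intros Hg Hf.
  eapply dpl_eq. apply (differentiable_pt_lim_comp (fun a b => g a) f f).
  apply (differentiable_pt_lim_proj1_0 g (f x y) (f x y)). exact Hg. exact Hf. exact Hf. ring. ring. Qed.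

Lemma dpl_inv (x0 : R) : x0 <> 0 -> derivable_pt_lim Rinv x0 (- / (x0 * x0)).
Proof. intros H. apply is_derive_Reals.
  replace (- / (x0 * x0)) with (- (1) / x0 ^ 2) by (field; auto).
  apply (is_derive_inv (fun t => t) x0 1). apply (@is_derive_id R_AbsRing). exact H. Qed.

Lemma conv1 (f : CC -> CC) z l : cderiv f z l ->
  @filterdiff C_AbsRing (AbsRing_NormedModule C_AbsRing) (AbsRing_NormedModule C_AbsRing) f (@locally (AbsRing_UniformSpace C_AbsRing) z) (fun y => scal y l).
Proof. intros [H1 H2]. split. destruct H1; split; assumption. exact H2. Qed.
Lemma conv2 (f : CC -> CC) z l :
  @filterdiff C_AbsRing (AbsRing_NormedModule C_AbsRing) (AbsRing_NormedModule C_AbsRing) f (@locally (AbsRing_UniformSpace C_AbsRing) z) (fun y => scal y l) -> cderiv f z l.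
Proof. intros [H1 H2]. split. destruct H1; split; assumption. exact H2. Qed.

Lemma Cd_eq f z l l' : cderiv f z l -> l = l' -> cderiv f z l'.
Proof. intros H ->; exact H. Qed.
Lemma Cd_ext f g z l : (forall t, f t = g t) -> cderiv f z l -> cderiv g z l.
Proof. intros H1 H2. exact (is_derive_ext f g z l H1 H2). Qed.
Lemma Cd_ext_loc f g z l : locC z (fun t => f t = g t) -> cderiv f z l -> cderiv g z l.
Proof. intros H1 H2. exact (is_derive_ext_loc f g z l H1 H2). Qed.
Lemma Cd_const (c : CC) z : cderiv (fun _ => c) z (RtoC 0).
Proof. exact (@is_derive_const C_AbsRing C_NormedModule c z). Qed.
Lemma Cd_id z : cderiv (fun t => t) z (RtoC 1).
Proof. apply conv2. exact (@is_derive_id C_AbsRing z). Qed.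
Lemma Cd_plus f g z df dg : cderiv f z df -> cderiv g z dg ->
  cderiv (fun t => Cplus (f t) (g t)) z (Cplus df dg).
Proof. intros H1 H2. exact (is_derive_plus f g z df dg H1 H2). Qed.
Lemma Cd_minus f g z df dg : cderiv f z df -> cderiv g z dg ->
  cderiv (fun t => Cminus (f t) (g t)) z (Cminus df dg).
Proof. intros H1 H2. exact (is_derive_minus f g z df dg H1 H2). Qed.
Lemma Cd_mult f g z df dg : cderiv f z df -> cderiv g z dg ->
  cderiv (fun t => Cmult (f t) (g t)) z (Cplus (Cmult df (g z)) (Cmult (f z) dg)).
Proof. intros H1 H2. apply conv2.
  generalize (@filterdiff_mult_fct C_AbsRing (AbsRing_NormedModule C_AbsRing) f g z _ _ Cmult_comm (conv1 _ _ _ H1) (conv1 _ _ _ H2)).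
  intros H. eapply filterdiff_ext_lin. exact H.
  intros y. change (Cplus (Cmult (Cmult y df) (g z)) (Cmult (f z) (Cmult y dg)) = Cmult y (Cplus (Cmult df (g z)) (Cmult (f z) dg))).
  ring. Qed.
Lemma Cd_comp f g z df dg : cderiv f (g z) df -> cderiv g z dg ->
  cderiv (fun t => f (g t)) z (Cmult dg df).
Proof. intros H1 H2. exact (@is_derive_comp C_AbsRing C_NormedModule f g z df dg H1 (conv1 _ _ _ H2)). Qed.

Lemma Cd_exp z : cderiv cexp z (cexp z).
Proof.
  destruct z as [x y].
  eapply Cd_eq.
  - apply (CR cexp (fun a b => exp a * cos b) (fun a b => exp a * sin b) x y
      (exp x * cos y) (- (exp x * sin y)) (exp x * sin y) (exp x * cos y)).
    + intros [a b]. reflexivity.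
    + eapply dpl_eq. apply dpl_mult.
      apply (dpl_comp1 exp (exp x) (fun a b => a)). apply derivable_pt_lim_exp. apply dpl_fst.
      apply (dpl_comp1 cos (- sin y) (fun a b => b)). apply derivable_pt_lim_cos. apply dpl_snd.
      simpl; ring. simpl; ring.
    + eapply dpl_eq. apply dpl_mult.
      apply (dpl_comp1 exp (exp x) (fun a b => a)). apply derivable_pt_lim_exp. apply dpl_fst.
      apply (dpl_comp1 sin (cos y) (fun a b => b)). apply derivable_pt_lim_sin. apply dpl_snd.
      simpl; ring. simpl; ring.
    + ring.
    + ring.
  - reflexivity.
Qed.


Lemma dpl_sq2 x y : differentiable_pt_lim (fun a b => a ^ 2 + b ^ 2) x y (2 * x) (2 * y).
Proof.
  eapply dpl_eq. apply dpl_plus.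
  apply (dpl_comp1 (fun t => t ^ 2) (INR 2 * x ^ 1) (fun a b => a)). apply derivable_pt_lim_pow. apply dpl_fst.
  apply (dpl_comp1 (fun t => t ^ 2) (INR 2 * y ^ 1) (fun a b => b)). apply derivable_pt_lim_pow. apply dpl_snd.
  simpl; ring. simpl; ring.
Qed.

Lemma dpl_negsnd x y : differentiable_pt_lim (fun a b => - b) x y 0 (-1).
Proof. intros eps. exists eps. intros u v _ _.
  replace (- v - - y - (0 * (u - x) + -1 * (v - y))) with 0 by ring. rewrite Rabs_R0.
  pose proof (cond_pos eps). pose proof (Rabs_pos (u - x)). pose proof (Rmax_l (Rabs (u-x)) (Rabs (v - y))). nra. Qed.

Lemma Cd_inv w : w <> RtoC 0 -> cderiv Cinv w (Copp (Cinv (Cmult w w))).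
Proof.
  intros Hw. destruct w as [x y].
  assert (HD : x ^ 2 + y ^ 2 <> 0).
  { intros HD. apply Hw. assert (x = 0) by nra. assert (y = 0) by nra. subst. reflexivity. }
  set (D := x ^ 2 + y ^ 2) in *.
  eapply Cd_eq.
  - apply (CR Cinv (fun a b => a * / (a ^ 2 + b ^ 2)) (fun a b => - b * / (a ^ 2 + b ^ 2)) x y
      ((y^2 - x^2) / (D * D)) (- (2 * x * y) / (D * D)) (2 * x * y / (D * D)) ((y^2 - x^2) / (D * D))).
    + intros [a b]. reflexivity.
    + eapply dpl_eq. apply dpl_mult. apply dpl_fst.
      apply (dpl_comp1 Rinv (- / (D * D)) (fun a b => a ^ 2 + b ^ 2)). apply dpl_inv. exact HD. apply dpl_sq2.
      simpl; unfold D; field; exact HD. simpl; unfold D; field; exact HD.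
    + eapply dpl_eq. apply dpl_mult.
      apply dpl_negsnd.
      apply (dpl_comp1 Rinv (- / (D * D)) (fun a b => a ^ 2 + b ^ 2)). apply dpl_inv. exact HD. apply dpl_sq2.
      simpl; unfold D; field; exact HD. simpl; unfold D; field; exact HD.
    + field; exact HD.
    + reflexivity.
  - unfold Copp, Cinv, Cmult; simpl. unfold D.
    assert (E : (x*x - y*y)*((x*x-y*y)*1) + (x*y+y*x)*((x*y+y*x)*1) = (x^2+y^2)*(x^2+y^2)) by ring.
    rewrite E. unfold D in HD. f_equal; field; exact HD.
Qed.

Lemma locally_Re_gt (z : CC) c : c < Re z -> locC z (fun p : CC => c < Re p).
Proof.
  intros H. assert (Hp : 0 < Re z - c) by lra.
  apply (locC_intro _ _ (mkposreal _ Hp)). intros w Hw. simpl in Hw.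
  pose proof (re_le_Cmod (Cminus w z)) as H1.
  unfold Cminus in H1. rewrite re_plus, re_opp in H1.
  unfold Cminus in Hw. assert (H3: Rabs (Re w + - Re z) < Re z - c) by lra.
  apply Rabs_def2 in H3 as [H4 H5]; lra.
Qed.

Lemma locC_mono (z : CC) (P Q : CC -> Prop) : locC z P -> (forall p, P p -> Q p) -> locC z Q.
Proof. intros [d Hd] H. exists d. intros w Hw. apply H, Hd, Hw. Qed.

Lemma Cd_log w : 0 < Re w -> cderiv clog w (Cinv w).
Proof.
  intros Hw. destruct w as [x y]. simpl in Hw.
  assert (HD : 0 < x ^ 2 + y ^ 2) by nra.
  assert (Hxy : x ^ 2 + y ^ 2 <> 0) by lra.
  set (D := x ^ 2 + y ^ 2) in *.
  assert (Hs : sqrt D * sqrt D = D) by (apply sqrt_sqrt; lra).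
  assert (Hsp : 0 < sqrt D) by (apply sqrt_lt_R0; lra).
  assert (H1 : 1 + (y * / x) ^ 2 <> 0). { pose proof (pow2_ge_0 (y * / x)). lra. }
  apply (Cd_ext_loc (fun p => (ln (sqrt (fst p ^ 2 + snd p ^ 2)), atan (snd p * / fst p)))).
  { apply (locC_mono _ _ _ (locally_Re_gt (x, y) 0 Hw)). intros [a b] Hp. simpl in Hp.
    unfold clog, carg, Cmod; simpl. destruct (Rlt_dec 0 a); [reflexivity | lra]. }
  eapply Cd_eq.
  - apply (CR _ (fun a b => ln (sqrt (a ^ 2 + b ^ 2))) (fun a b => atan (b * / a)) x y
      (x / D) (y / D) (- y / D) (x / D)).
    + intros [a b]. reflexivity.
    + eapply dpl_eq.
      apply (dpl_comp1 ln (/ sqrt D) (fun a b => sqrt (a ^ 2 + b ^ 2))). apply derivable_pt_lim_ln. exact Hsp.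
      apply (dpl_comp1 sqrt (/ (2 * sqrt D)) (fun a b => a ^ 2 + b ^ 2)). apply derivable_pt_lim_sqrt. exact HD.
      apply dpl_sq2.
      replace (x / D) with (x / (sqrt D * sqrt D)) by (rewrite Hs; reflexivity). field. lra.
      replace (y / D) with (y / (sqrt D * sqrt D)) by (rewrite Hs; reflexivity). field. lra.
    + eapply dpl_eq.
      apply (dpl_comp1 atan (/ (1 + (y * / x) ^ 2)) (fun a b => b * / a)). apply derivable_pt_lim_atan.
      apply dpl_mult. apply dpl_snd.
      apply (dpl_comp1 Rinv (- / (x * x)) (fun a b => a)). apply dpl_inv. lra. apply dpl_fst.
      simpl. unfold D. field. split; [exact Hxy | lra].
      simpl. unfold D. field. split; [exact Hxy | lra].
    + field. exact Hxy.
    + reflexivity.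
  - unfold Cinv; simpl. unfold D. f_equal; field; exact Hxy.
Qed.

Definition P (a : R) (z : CC) : CC := cexp (Cmult (RtoC a) (clog (Cminus (RtoC 1) z))).

Lemma inD_Re z : inD z -> Re z < 1.
Proof. unfold inD. intros H. pose proof (re_le_Cmod z). pose proof (Rle_abs (Re z)). lra. Qed.

Lemma cexp_nz w : cexp w <> RtoC 0.
Proof. unfold cexp. intros H. injection H. intros H1 H2.
  pose proof (exp_pos (Re w)). pose proof (sin2_cos2 (Im w)). unfold Rsqr in *.
  apply Rmult_integral in H1 as [H1|H1]; [lra|]. apply Rmult_integral in H2 as [H2|H2]; [lra|].
  rewrite H1, H2 in H3. lra. Qed.

Lemma one_minus_nz z : Re z < 1 -> Cminus (RtoC 1) z <> RtoC 0.
Proof. intros H E. assert (Re (Cminus (RtoC 1) z) = 0) by (rewrite E; reflexivity).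
  unfold Cminus in H0. rewrite re_plus, re_opp in H0. simpl in H0. lra. Qed.

Lemma Cd_P a z : Re z < 1 ->
  cderiv (P a) z (Cmult (RtoC (- a)) (Cmult (P a z) (Cinv (Cminus (RtoC 1) z)))).
Proof.
  intros Hz. unfold P.
  eapply Cd_eq.
  - apply (Cd_comp cexp (fun t => Cmult (RtoC a) (clog (Cminus (RtoC 1) t)))).
    apply Cd_exp.
    apply Cd_mult. apply Cd_const.
    apply (Cd_comp clog (fun t => Cminus (RtoC 1) t)). apply Cd_log.
    unfold Cminus. rewrite re_plus, re_opp. simpl. lra.
    apply Cd_minus. apply Cd_const. apply Cd_id.
  - match goal with |- ?A = ?B => change (@eq Complex.C A B) end.
    rewrite RtoC_opp. ring.
Qed.


Lemma cpow_P gam t : Re t < 1 -> cpow (Cminus (RtoC 1) t) gam = P gam t.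
Proof. intros H. unfold cpow. destruct (Req_EM_T _ _) as [E|E]; [|reflexivity].
  exfalso. apply Cmod_eq_0 in E. exact (one_minus_nz t H E). Qed.

Lemma RtoC_nz r : r <> 0 -> RtoC r <> RtoC 0.
Proof. intros H E. apply H. injection E. auto. Qed.

Lemma Cinv_nz (w : CC) : w <> RtoC 0 -> Cinv w <> RtoC 0.
Proof. intros H E. apply C1_nz. rewrite <- (Cinv_r w H). change (Cmult w (Cinv w) = RtoC 0). rewrite E. apply Cmult_0_r. Qed.

Definition h1f gam (z : CC) := Cmult (P gam z) (Cinv (Cminus (RtoC 1) z)).
Definition h2f gam (z : CC) := Cmult (RtoC (1 - gam)) (Cmult (P gam z) (Cinv (Cmult (Cminus (RtoC 1) z) (Cminus (RtoC 1) z)))).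

Lemma deriv_h gam z : 0 < gam -> Re z < 1 -> cderiv (h_gam gam) z (h1f gam z).
Proof.
  intros Hg Hz. pose proof (one_minus_nz z Hz) as Hn. pose proof (cexp_nz (Cmult (RtoC gam) (clog (Cminus (RtoC 1) z)))) as HP.
  change (cexp (Cmult (RtoC gam) (clog (Cminus (RtoC 1) z)))) with (P gam z) in HP.
  assert (Hg' : RtoC gam <> RtoC 0) by (apply RtoC_nz; lra).
  apply (Cd_ext_loc (fun t => Cmult (Cminus (RtoC 1) (P gam t)) (Cinv (RtoC gam)))).
  { apply (locC_mono _ _ _ (locally_Re_lt z 1 Hz)). intros t Ht. unfold h_gam. rewrite cpow_P by exact Ht. reflexivity. }
  eapply Cd_eq.
  - apply Cd_mult. apply Cd_minus. apply Cd_const. apply Cd_P. exact Hz. apply Cd_const.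
  - unfold h1f. match goal with |- ?A = ?B => change (@eq Complex.C A B) end.
    rewrite RtoC_opp. field. auto.
Qed.

Lemma P_nz gam z : P gam z <> RtoC 0.
Proof. apply cexp_nz. Qed.

Lemma deriv_h1 gam z : Re z < 1 -> cderiv (h1f gam) z (h2f gam z).
Proof.
  intros Hz. pose proof (one_minus_nz z Hz) as Hn. pose proof (P_nz gam z) as HP.
  eapply Cd_eq.
  - unfold h1f. apply Cd_mult. apply Cd_P. exact Hz.
    apply (Cd_comp Cinv (fun t => Cminus (RtoC 1) t)). apply Cd_inv. exact Hn.
    apply Cd_minus. apply Cd_const. apply Cd_id.
  - unfold h2f. match goal with |- ?A = ?B => change (@eq Complex.C A B) end.
    rewrite RtoC_opp, RtoC_minus. field. auto.
Qed.

Lemma deriv_g gam z : 0 < gam -> Re z < 1 -> cderiv (g_gam gam) z (Cmult z (h1f gam z)).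
Proof.
  intros Hg Hz. pose proof (one_minus_nz z Hz) as Hn. pose proof (P_nz gam z) as HP.
  assert (Hg' : RtoC gam <> RtoC 0) by (apply RtoC_nz; lra).
  assert (Hg2 : RtoC (1 + gam) <> RtoC 0) by (apply RtoC_nz; lra).
  apply (Cd_ext_loc (fun t => Cmult (Cminus (RtoC 1) (Cmult (Cplus (RtoC 1) (Cmult (RtoC gam) t)) (P gam t)))
      (Cinv (Cmult (RtoC gam) (RtoC (1 + gam)))))).
  { apply (locC_mono _ _ _ (locally_Re_lt z 1 Hz)). intros t Ht. unfold g_gam. rewrite cpow_P by exact Ht.
    rewrite RtoC_mult. reflexivity. }
  eapply Cd_eq.
  - apply Cd_mult. apply Cd_minus. apply Cd_const. apply Cd_mult.
    apply Cd_plus. apply Cd_const. apply Cd_mult. apply Cd_const. apply Cd_id.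
    apply Cd_P. exact Hz. apply Cd_const.
  - unfold h1f. match goal with |- ?A = ?B => change (@eq Complex.C A B) end.
    rewrite RtoC_opp. rewrite RtoC_plus in *. field. auto.
Qed.

Lemma cond_re gam z : 1 < gam -> inD z ->
  Re (Cplus (RtoC 1) (Cdiv (Cmult z (h2f gam z)) (h1f gam z))) < (1 + gam) / 2.
Proof.
  intros Hg HzD. pose proof (inD_Re z HzD) as Hz.
  pose proof (one_minus_nz z Hz) as Hn. pose proof (P_nz gam z) as HP.
  assert (E : Cdiv (Cmult z (h2f gam z)) (h1f gam z) = Cmult (RtoC (1 - gam)) (Cdiv z (Cminus (RtoC 1) z))).
  { unfold h1f, h2f. change (@eq Complex.C (Cdiv (Cmult z (Cmult (RtoC (1 - gam)) (Cmult (P gam z) (Cinv (Cmult (Cminus (RtoC 1) z) (Cminus (RtoC 1) z)))))) (Cmult (P gam z) (Cinv (Cminus (RtoC 1) z)))) (Cmult (RtoC (1 - gam)) (Cdiv z (Cminus (RtoC 1) z)))).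
    field. auto. }
  rewrite E. unfold inD in HzD. destruct z as [x y]. unfold Cmod in HzD. simpl in HzD.
  assert (H2 : x ^ 2 + y ^ 2 < 1).
  { assert (Hq : sqrt (x^2+y^2) < sqrt 1) by (rewrite sqrt_1; exact HzD). apply sqrt_lt_0_alt in Hq. exact Hq. }
  unfold Cdiv, Cmult, Cplus, Cinv, Cminus, Copp; simpl.
  set (D := (1 + - x) * ((1 + - x) * 1) + (0 + - y) * ((0 + - y) * 1)).
  assert (HD : 0 < D) by (unfold D; simpl in Hz; nra).
  match goal with |- ?L < _ => assert (EL : L = (1 + gam) / 2 - (gam - 1) * (1 - x ^ 2 - y ^ 2) / (2 * D)) end.
  { unfold D. field. unfold D in HD. lra. }
  rewrite EL. assert (0 < (gam - 1) * (1 - x ^ 2 - y ^ 2) / (2 * D)).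
  { apply Rdiv_lt_0_compat. apply Rmult_lt_0_compat; lra. lra. }
  lra.
Qed.

Lemma clog1 : clog (RtoC 1) = (0, 0).
Proof.
  unfold clog. rewrite Cmod_1, ln_1. f_equal. unfold carg. simpl.
  destruct (Rlt_dec 0 1); [|lra]. unfold Rdiv. rewrite Rmult_0_l. apply atan_0.
Qed.

Lemma P0 gam : P gam (RtoC 0) = RtoC 1.
Proof.
  unfold P. replace (Cminus (RtoC 1) (RtoC 0)) with (RtoC 1).
  2: { change (@eq Complex.C (RtoC 1) (Cminus (RtoC 1) (RtoC 0))). ring. }
  rewrite clog1. unfold cexp, Cmult. simpl.
  replace (gam * 0 - 0 * 0) with 0 by ring. replace (gam * 0 + 0 * 0) with 0 by ring.
  rewrite exp_0, cos_0, sin_0. unfold RtoC. f_equal; ring.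
Qed.

Lemma inP_gam gam beta : 1 < gam -> (1 + gam) / 2 <= beta -> in_P beta (h_gam gam) (g_gam gam).
Proof.
  intros Hg Hb. exists (h1f gam), (h2f gam), (fun z => Cmult z (h1f gam z)).
  assert (H0 : Re (RtoC 0) < 1) by (simpl; lra).
  split; [|split; [|split; [|split; [|split]]]].
  - intros z Hz. pose proof (inD_Re z Hz). split; [|split].
    apply deriv_h; lra. apply deriv_h1; lra. apply deriv_g; lra.
  - unfold h_gam. rewrite cpow_P by exact H0. rewrite P0.
    change (@eq Complex.C (Cdiv (Cminus (RtoC 1) (RtoC 1)) (RtoC gam)) (RtoC 0)).
    field. apply RtoC_nz. lra.
  - unfold g_gam. rewrite cpow_P by exact H0. rewrite P0.
    change (@eq Complex.C (Cdiv (Cminus (RtoC 1) (Cmult (Cplus (RtoC 1) (Cmult (RtoC gam) (RtoC 0))) (RtoC 1))) (RtoC (gam * (1 + gam)))) (RtoC 0)).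
    field. apply RtoC_nz. nra.
  - unfold h1f. rewrite P0.
    replace (Cminus (RtoC 1) (RtoC 0)) with (RtoC 1).
    2: { change (@eq Complex.C (RtoC 1) (Cminus (RtoC 1) (RtoC 0))). ring. }
    change (@eq Complex.C (Cmult (RtoC 1) (Cinv (RtoC 1))) (RtoC 1)). field; try exact C1_nz.
  - intros z _. reflexivity.
  - intros z Hz. pose proof (inD_Re z Hz). split.
    + unfold h1f. apply Cmult_neq_0. apply P_nz. apply Cinv_nz. apply one_minus_nz. lra.
    + pose proof (cond_re gam z Hg Hz). lra.
Qed.

Lemma nonuniv gam : 1 < gam -> ~ univalent_D (harm (h_gam gam) (g_gam gam)).
Proof.
  intros Hg Hu.
  set (phi := PI / (gam + 1)).
  assert (Hphi : 0 < phi < PI / 2).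
  { unfold phi. pose proof PI_RGT_0. split. apply Rdiv_lt_0_compat; lra.
    apply (Rmult_lt_reg_r (gam + 1)). lra. unfold Rdiv. field_simplify; try lra. nra. }
  set (c := cos phi). set (s := sin phi).
  assert (Hc : 0 < c) by (apply cos_gt_0; lra).
  assert (Hs : 0 < s) by (apply sin_gt_0; pose proof PI_RGT_0; lra).
  assert (Hcs : s * s + c * c = 1) by (pose proof (sin2_cos2 phi); unfold Rsqr in H; fold s c in H; lra).
  assert (Hkey : sin (gam * phi) * c + cos (gam * phi) * s = 0).
  { unfold c, s. rewrite <- sin_plus. replace (gam * phi + phi) with PI. apply sin_PI.
    unfold phi. field. lra. }
  set (w1 := (c * c, c * s) : CC). set (w2 := (c * c, - (c * s)) : CC).
  assert (Hm : Cmod w1 = Cmod w2).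
  { unfold w1, w2, Cmod. simpl. f_equal. ring. }
  assert (Ha1 : carg w1 = phi).
  { unfold carg, w1. simpl. destruct (Rlt_dec 0 (c * c)) as [_|n]; [|exfalso; nra].
    replace (c * s / (c * c)) with (tan phi). apply atan_tan. lra.
    unfold tan. fold s c. field. lra. }
  assert (Ha2 : carg w2 = - phi).
  { unfold carg, w2. simpl. destruct (Rlt_dec 0 (c * c)) as [_|n]; [|exfalso; nra].
    replace (- (c * s) / (c * c)) with (tan (- phi)). apply atan_tan. lra.
    unfold tan. rewrite sin_neg, cos_neg. fold s c. field. lra. }
  assert (Hw1 : Cmod w1 <> 0).
  { intros E. apply Cmod_eq_0 in E. unfold w1 in E. injection E. intros. nra. }
  assert (Hw2 : Cmod w2 <> 0) by (rewrite <- Hm; exact Hw1).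
  assert (Hz1 : Cminus (RtoC 1) (Cminus (RtoC 1) w1) = w1).
  { change (@eq Complex.C (Cminus (RtoC 1) (Cminus (RtoC 1) w1)) w1). ring. }
  assert (Hz2 : Cminus (RtoC 1) (Cminus (RtoC 1) w2) = w2).
  { change (@eq Complex.C (Cminus (RtoC 1) (Cminus (RtoC 1) w2)) w2). ring. }
  assert (HD1 : inD (Cminus (RtoC 1) w1)).
  { unfold inD, Cmod, w1. simpl. apply (Rlt_le_trans _ (sqrt 1)); [apply sqrt_lt_1_alt; split | rewrite sqrt_1; apply Rle_refl].
    - nra.
    - nra. }
  assert (HD2 : inD (Cminus (RtoC 1) w2)).
  { unfold inD, Cmod, w2. simpl. apply (Rlt_le_trans _ (sqrt 1)); [apply sqrt_lt_1_alt; split | rewrite sqrt_1; apply Rle_refl].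
    - nra.
    - nra. }
  specialize (Hu _ _ HD1 HD2).
  assert (Hne : Cminus (RtoC 1) w1 <> Cminus (RtoC 1) w2).
  { intros E. assert (Im (Cminus (RtoC 1) w1) = Im (Cminus (RtoC 1) w2)) by (rewrite E; reflexivity).
    unfold w1, w2 in H. simpl in H. nra. }
  apply Hne, Hu. clear Hu Hne HD1 HD2.
  unfold harm, h_gam, g_gam. rewrite Hz1, Hz2.
  unfold cpow. destruct (Req_EM_T (Cmod w1) 0) as [E|_]; [contradiction|].
  destruct (Req_EM_T (Cmod w2) 0) as [E|_]; [contradiction|].
  unfold clog. rewrite Ha1, Ha2, <- Hm.
  set (L := ln (Cmod w1)).
  unfold cexp, Cmult, RtoC; simpl.
  replace (gam * L - 0 * phi) with (gam * L) by ring.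
  replace (gam * L - 0 * - phi) with (gam * L) by ring.
  replace (gam * phi + 0 * L) with (gam * phi) by ring.
  replace (gam * - phi + 0 * L) with (- (gam * phi)) by ring.
  rewrite cos_neg, sin_neg.
  assert (HS : sin (gam * phi) = - cos (gam * phi) * s / c) .
  { apply (Rmult_eq_reg_r c). 2: lra.
    replace (- cos (gam * phi) * s / c * c) with (- cos (gam * phi) * s) by (field; lra). lra. }
  rewrite HS. set (E := exp (gam * L)). set (K := cos (gam * phi)).
  unfold Cdiv, Cinv, Cconj, Cminus, Cplus, Copp, Cmult; simpl.
  f_equal; field; lra.
Qed.

Theorem mainTheorem1 :
  (forall beta : R, 1 < beta <= 11 / 8 ->
     exists h g : CC -> CC, in_P beta h g /\ ~ univalent_D (harm h g)) /\
  (forall gam : R, 1 < gam <= 7 / 4 ->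
     in_P ((1 + gam) / 2) (h_gam gam) (g_gam gam) /\
     (forall beta : R, (1 + gam) / 2 <= beta -> in_P beta (h_gam gam) (g_gam gam)) /\
     ~ univalent_D (harm (h_gam gam) (g_gam gam))).
Proof.
  split.
  - intros beta Hb. exists (h_gam (2 * beta - 1)), (g_gam (2 * beta - 1)). split.
    + apply inP_gam. lra. lra.
    + apply nonuniv. lra.
  - intros gam Hg. split; [|split].
    + apply inP_gam; lra.
    + intros beta Hb. apply inP_gam; lra.
    + apply nonuniv; lra.
Qed.
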